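(* Let $S>0$ and $\xi<0$, and define for $x>0$ \[ f(x)=N\!\left(\xi+\frac1S\ln x\right)-x^{-\frac{2\xi}{S}}N\!\left(\xi-\frac1S\ln x\right). \] Then there exists $\varepsilon>0$ such that $f(x)<0$ and $f'(x)<0$ for all $x\in(0,\varepsilon)$. Moreover, if $-S/2<\xi<0$ then $\lim_{x\to0^+}f'(x)=-\infty$; if $\xi=-S/2$ then $\lim_{x\to0^+}f'(x)=-1$; and if $\xi<-S/2$ then $\lim_{x\to0^+}f'(x)=0$.
   Context: $N(x)=\frac{1}{\sqrt{2\pi}}\int_{-\infty}^{x}e^{-s^2/2}\,ds$ is the standard normal distribution function. *)

(* Defs.v *)
From Stdlib Require Import Reals.
From Coquelicot Require Import Coquelicot.
Open Scope R_scope.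

Definition Ncdf (x : R) : R :=
  / sqrt (2 * PI) * RInt_gen (fun s => exp (- s ^ 2 / 2)) (Rbar_locally m_infty) (at_point x).

Definition fpaper (S xi : R) (x : R) : R :=
  Ncdf (xi + / S * ln x) - Rpower x (- (2 * xi) / S) * Ncdf (xi - / S * ln x).

(* Main.v *)
Require Import Defs.
From Stdlib Require Import Reals Lra.
From Coquelicot Require Import Coquelicot.
Open Scope R_scope.

Definition phi (s : R) : R := exp (- s ^ 2 / 2).
Definition G (y : R) : R := RInt phi 0 y.

Lemma phi_cont x : continuous phi x.
Proof. apply (ex_derive_continuous phi x). unfold phi. auto_derive. auto. Qed.

Lemma phi_ex a b : ex_RInt phi a b.
Proof. apply (ex_RInt_continuous (V:=R_CompleteNormedModule)). intros; apply phi_cont. Qed.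

Lemma G_deriv y : is_derive G y (phi y).
Proof.
  apply is_derive_RInt with (a := 0).
  apply filter_forall; intros; apply (RInt_correct (V:=R_CompleteNormedModule)), phi_ex.
  apply phi_cont.
Qed.

Lemma phi_pos x : 0 < phi x.
Proof. apply exp_pos. Qed.

Lemma G_ge0 y : 0 <= y -> 0 <= G y.
Proof. intros; apply RInt_ge_0; auto. apply phi_ex. intros; left; apply phi_pos. Qed.

Lemma G_opp y : G (- y) = - G y.
Proof.
  unfold G.
  assert (H := RInt_comp_lin phi (-1) 0 0 y).
  replace (-1 * 0 + 0) with 0 in H by ring.
  replace (-1 * y + 0) with (-y) in H by ring.
  rewrite <- H by apply phi_ex.
  rewrite (RInt_ext _ (fun x => opp (phi x))).
  rewrite (RInt_opp (V:=R_CompleteNormedModule)) by apply phi_ex. reflexivity.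
  intros x _. change (-1 * phi (-1 * x + 0) = - phi x). unfold phi.
  replace ((-1 * x + 0) ^ 2) with (x ^ 2) by ring. ring.
Qed.

Definition kf (t u : R) : R := exp (- (t ^ 2 * (1 + u ^ 2)) / 2) / (1 + u ^ 2).
Definition K (t : R) : R := RInt (kf t) 0 1.

Lemma pos1u u : 0 < 1 + u ^ 2.
Proof. nra. Qed.

Lemma kf_derive_t u t : is_derive (fun z => kf z u) t (- t * exp (- (t ^ 2 * (1 + u ^ 2)) / 2)).
Proof.
  unfold kf. pose proof (pos1u u) as Hu.
  auto_derive. lra. replace (- (t * (t * 1) * (1 + u * (u * 1))) * / 2) with (- (t ^ 2 * (1 + u ^ 2)) / 2) by (unfold Rdiv; ring). field. lra.
Qed.

Lemma kf_Derive u t : Derive (fun z => kf z u) t = - t * exp (- (t ^ 2 * (1 + u ^ 2)) / 2).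
Proof. apply is_derive_unique, kf_derive_t. Qed.

Lemma kf_cont t u : continuous (kf t) u.
Proof. apply (ex_derive_continuous (kf t) u). unfold kf. pose proof (pos1u u). auto_derive. lra. Qed.

Lemma kf_ex t a b : ex_RInt (kf t) a b.
Proof. apply (ex_RInt_continuous (V:=R_CompleteNormedModule)). intros; apply kf_cont. Qed.

Lemma K_deriv (t : R) : is_derive K t (- exp (- t ^ 2 / 2) * G t).
Proof.
  assert (H := is_derive_RInt_param kf 0 1 t).
  unfold K.
  replace (- exp (- t ^ 2 / 2) * G t) with (RInt (fun u => Derive (fun z => kf z u) t) 0 1).
  apply H.
  - apply filter_forall. intros x0 u _. eexists. apply kf_derive_t.
  - intros u _. apply continuity_2d_pt_ext with (f := fun x y => - x * exp (- (x ^ 2 * (1 + y ^ 2)) / 2)).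
    intros; rewrite kf_Derive; auto.
    apply continuity_2d_pt_mult.
    apply continuity_2d_pt_opp, continuity_2d_pt_id1.
    apply continuity_1d_2d_pt_comp with (f := exp).
    apply derivable_continuous_pt, derivable_pt_exp.
    apply continuity_2d_pt_ext with (f := fun x y => ((x * x) * (1 + y * y)) * (- / 2)).
    intros; field.
    apply continuity_2d_pt_mult; [|apply continuity_2d_pt_const].
    apply continuity_2d_pt_mult; [apply continuity_2d_pt_mult; apply continuity_2d_pt_id1|].
    apply continuity_2d_pt_plus; [apply continuity_2d_pt_const|].
    apply continuity_2d_pt_mult; apply continuity_2d_pt_id2.
  - apply filter_forall. intros; apply kf_ex.
  - rewrite (RInt_ext _ (fun u => scal (- exp (- t ^ 2 / 2)) (scal t (phi (t * u + 0))))).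
    rewrite (RInt_scal (V:=R_CompleteNormedModule)).
    rewrite (RInt_comp_lin (V:=R_CompleteNormedModule)).
    replace (t * 0 + 0) with 0 by ring. replace (t * 1 + 0) with t by ring. reflexivity.
    apply phi_ex.
    apply (ex_RInt_comp_lin (V:=R_CompleteNormedModule)); apply phi_ex.
    intros u _. rewrite kf_Derive. change (- t * exp (- (t ^ 2 * (1 + u ^ 2)) / 2) = - exp (- t ^ 2 / 2) * (t * phi (t * u + 0))).
    unfold phi. replace (- (t ^ 2 * (1 + u ^ 2)) / 2) with (- t ^ 2 / 2 + - (t * u + 0) ^ 2 / 2) by field.
    rewrite exp_plus. ring.
Qed.

Lemma is_derive_eq (f : R -> R) (x l l' : R) : is_derive f x l -> l = l' -> is_derive f x l'.
Proof. intros H <-; exact H. Qed.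

Definition FF (t : R) : R := G t ^ 2 + 2 * K t.

Lemma FF_deriv (t : R) : is_derive FF t 0.
Proof.
  eapply is_derive_eq.
  apply (is_derive_plus (K:=R_AbsRing) (V:=R_NormedModule) (fun t => G t ^ 2) (fun t => 2 * K t)).
  apply is_derive_pow, G_deriv.
  apply is_derive_scal, K_deriv.
  change (INR 2 * phi t * G t ^ 1 + 2 * (- exp (- t ^ 2 / 2) * G t) = 0).
  unfold phi. simpl. ring.
Qed.

Lemma FF_const (t : R) : FF t = FF 0.
Proof.
  assert (H := is_RInt_derive (V:=R_CompleteNormedModule) FF (fun _ => 0) 0 t).
  assert (H1 : is_RInt (fun _ : R => 0) 0 t (minus (FF t) (FF 0))).
  { apply H. intros; apply FF_deriv. intros; apply continuous_const. }
  apply (is_RInt_unique (V:=R_CompleteNormedModule)) in H1.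
  rewrite (RInt_const (V:=R_CompleteNormedModule)) in H1.
  change (scal (t - 0) 0) with ((t - 0) * 0) in H1.
  change (minus (FF t) (FF 0)) with (FF t - FF 0) in H1. lra.
Qed.

Lemma FF0 : FF 0 = PI / 2.
Proof.
  unfold FF, G, K. rewrite RInt_point. change (zero : R) with 0.
  rewrite (RInt_ext _ (fun u => / (1 + u ^ 2))).
  assert (H := is_RInt_derive (V:=R_CompleteNormedModule) atan (fun u => / (1 + u ^ 2)) 0 1).
  assert (H1 : is_RInt (fun u : R => / (1 + u ^ 2)) 0 1 (minus (atan 1) (atan 0))).
  { apply H.
  intros; apply is_derive_Reals, derivable_pt_lim_atan.
  intros. apply (ex_derive_continuous (fun u : R => / (1 + u ^ 2)) x). pose proof (pos1u x). auto_derive. lra. }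
  rewrite (is_RInt_unique (V:=R_CompleteNormedModule) _ _ _ _ H1).
  change (minus (atan 1) (atan 0)) with (atan 1 - atan 0).
  rewrite atan_1, atan_0. field.
  intros x _. unfold kf. match goal with |- ?a = ?b => change (@eq R a b) end. assert (E: - (0 ^ 2 * (1 + x ^ 2)) / 2 = 0) by (simpl; field). rewrite E, exp_0. field. pose proof (pos1u x); lra.
Qed.

Lemma exp_le_mono a b : a <= b -> exp a <= exp b.
Proof. intros [H|H]. left; apply exp_increasing; auto. subst; lra. Qed.

Lemma K_bounds t : 0 <= K t <= exp (- t ^ 2 / 2).
Proof.
  split.
  - apply RInt_ge_0. lra. apply kf_ex. intros u _. unfold kf.
    pose proof (pos1u u). pose proof (exp_pos (- (t ^ 2 * (1 + u ^ 2)) / 2)).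
    left; apply Rdiv_lt_0_compat; auto.
  - unfold K. replace (exp (- t ^ 2 / 2)) with (RInt (fun _ => exp (- t ^ 2 / 2)) 0 1).
    apply RInt_le. lra. apply kf_ex. apply (ex_RInt_const (V:=R_CompleteNormedModule)).
    intros u _. unfold kf. pose proof (pos1u u).
    pose proof (exp_pos (- (t ^ 2 * (1 + u ^ 2)) / 2)).
    apply Rle_trans with (exp (- (t ^ 2 * (1 + u ^ 2)) / 2)).
    apply (Rmult_le_reg_r (1 + u ^ 2)). auto. field_simplify. 2: lra. nra.
    apply exp_le_mono. assert (0 <= t ^ 2 * u ^ 2) by nra. lra.
    rewrite (RInt_const (V:=R_CompleteNormedModule)). change (scal (1 - 0) (exp (- t ^ 2 / 2)) = exp (- t ^ 2 / 2)). change ((1 - 0) * exp (- t ^ 2 / 2) = exp (- t ^ 2 / 2)). ring.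
Qed.

Lemma lim_sq_m : is_lim (fun t => - t ^ 2 / 2) p_infty m_infty.
Proof.
  intros P [M HM]. exists (Rabs M + 2). intros x Hx. apply HM.
  assert (Rabs M >= M) by (apply Rle_ge, RRle_abs). assert (0 <= Rabs M) by apply Rabs_pos.
  pose proof (Rabs_maj2 M). assert (x ^ 2 >= 2 * x) by nra. lra.
Qed.

Lemma lim_e : is_lim (fun t => exp (- t ^ 2 / 2)) p_infty 0.
Proof.
  apply (is_lim_comp exp (fun t => - t ^ 2 / 2) p_infty 0 m_infty).
  exact is_lim_exp_m. exact lim_sq_m.
  exists 0. intros; discriminate.
Qed.

Lemma K_lim : is_lim K p_infty 0.
Proof.
  apply (filterlim_le_le (F := Rbar_locally' p_infty) (fun _ => 0) K (fun t => exp (- t ^ 2 / 2))).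
  apply filter_forall. apply K_bounds.
  apply is_lim_const. apply lim_e.
Qed.

Lemma G2_lim : is_lim (fun t => G t ^ 2) p_infty (PI / 2).
Proof.
  apply is_lim_ext with (fun t => PI / 2 - 2 * K t).
  intros t. rewrite <- FF0, <- (FF_const t). unfold FF. ring.
  eapply is_lim_minus. apply is_lim_const. apply is_lim_scal_l, K_lim.
  simpl. unfold is_Rbar_minus, is_Rbar_plus. simpl. f_equal. f_equal. ring.
Qed.

Definition Ival := sqrt (PI / 2).

Lemma G_lim_p : is_lim G p_infty Ival.
Proof.
  apply is_lim_ext_loc with (fun t => sqrt (G t ^ 2)).
  exists 0. intros. apply sqrt_pow2, G_ge0. lra.
  unfold is_lim. apply filterlim_comp with (G := locally (PI / 2)).
  apply G2_lim.
  apply continuity_pt_filterlim. apply continuity_pt_sqrt. pose proof PI_RGT_0. lra.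
Qed.

Lemma G_lim_m : is_lim G m_infty (- Ival).
Proof.
  apply is_lim_ext with (fun t => - G (- t)).
  intros; rewrite G_opp; ring.
  apply (is_lim_opp (fun t => G (- t)) m_infty Ival).
  apply (is_lim_comp G (fun t => - t) m_infty Ival p_infty).
  apply G_lim_p.
  apply (is_lim_opp (fun t => t) m_infty m_infty), is_lim_id.
  exists 0. intros; discriminate.
Qed.

Definition cN := / sqrt (2 * PI).

Lemma Derive_G : Derive G = phi.
Proof.
  apply FunctionalExtensionality.functional_extensionality. intro; apply is_derive_unique, G_deriv.
Qed.

Lemma Ncdf_eq y : Ncdf y = cN * (G y + Ival).
Proof.
  unfold Ncdf, cN. f_equal.
  apply (is_RInt_gen_unique (V:=R_CompleteNormedModule)).
  replace (G y + Ival) with (G y - - Ival) by ring.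
  apply (is_RInt_gen_ext (Derive G)).
  apply filter_forall. intros; rewrite Derive_G; reflexivity.
  apply is_RInt_gen_Derive.
  apply filter_forall. intros. eexists; apply G_deriv.
  apply filter_forall. intros. rewrite Derive_G; apply phi_cont.
  exact G_lim_m.
  intros P HP. apply locally_singleton in HP. exact HP.
Qed.

Lemma cN_Ival : cN * Ival = / 2.
Proof.
  unfold cN, Ival. pose proof PI_RGT_0.
  replace (2 * PI) with (2 ^ 2 * (PI / 2)) by field.
  rewrite sqrt_mult_alt, sqrt_pow2. field.
  apply Rgt_not_eq, sqrt_lt_R0. lra. lra. nra.
Qed.

Lemma cN_pos : 0 < cN.
Proof. unfold cN. apply Rinv_0_lt_compat, sqrt_lt_R0. pose proof PI_RGT_0. lra. Qed.

Lemma Ncdf_eq2 y : Ncdf y = / 2 + cN * G y.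
Proof. rewrite Ncdf_eq, <- cN_Ival. ring. Qed.

Lemma Ncdf_deriv y : is_derive Ncdf y (cN * phi y).
Proof.
  apply is_derive_ext with (fun y => / 2 + cN * G y).
  intros; rewrite Ncdf_eq2; auto.
  eapply is_derive_eq. auto_derive. eexists; apply G_deriv.
  reflexivity. change (cN * (1 * Derive G y) = cN * phi y). rewrite Derive_G. ring.
Qed.

Lemma Ncdf_lim_p : is_lim Ncdf p_infty 1.
Proof.
  apply is_lim_ext with (fun y => / 2 + cN * G y). intros; rewrite Ncdf_eq2; auto.
  eapply is_lim_plus. apply is_lim_const. apply is_lim_scal_l, G_lim_p.
  simpl. unfold is_Rbar_plus; simpl. rewrite cN_Ival. f_equal; f_equal; field.
Qed.

Lemma Ncdf_lim_m : is_lim Ncdf m_infty 0.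
Proof.
  apply is_lim_ext with (fun y => / 2 + cN * G y). intros; rewrite Ncdf_eq2; auto.
  eapply is_lim_plus. apply is_lim_const. apply is_lim_scal_l, G_lim_m.
  simpl. unfold is_Rbar_plus; simpl. f_equal; f_equal. rewrite <- cN_Ival. ring.
Qed.

Lemma Derive_Ncdf : Derive Ncdf = fun y => cN * phi y.
Proof. apply FunctionalExtensionality.functional_extensionality. intro; apply is_derive_unique, Ncdf_deriv. Qed.

Section Main.
Variables S xi : R.
Hypothesis hS : 0 < S.
Definition aa := / S.
Definition pp := - (2 * xi) / S.
Definition gfun (L : R) := 2 * aa * cN * phi (xi - aa * L) - pp * Ncdf (xi - aa * L).
Definition Dfun (L : R) := exp ((pp - 1) * L) * gfun L.

Lemma key L : exp (pp * L) * phi (xi - aa * L) = phi (xi + aa * L).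
Proof.
  unfold phi, pp, aa. rewrite <- exp_plus. f_equal. field. lra.
Qed.

Lemma Derive_Ncdf' y : Derive (fun x0 => Ncdf x0) y = cN * phi y.
Proof. apply is_derive_unique, Ncdf_deriv. Qed.

Lemma f_deriv x : 0 < x -> is_derive (fpaper S xi) x (Dfun (ln x)).
Proof.
  intro hx. unfold fpaper, Rpower.
  eapply is_derive_eq. auto_derive.
  repeat split; auto; eexists; apply Ncdf_deriv.
  reflexivity.
  rewrite !Derive_Ncdf'.
  set (L := ln x).
  assert (Hx : / x = exp (- L)) by (unfold L; rewrite exp_Ropp, exp_ln; auto).
  rewrite Hx.
  assert (K1 : phi (xi + / S * L) = exp (- (2 * xi) / S * L) * phi (xi + - (/ S * L))).
  { exact (eq_sym (key L)). }
  rewrite K1. unfold Dfun, gfun.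
  replace ((pp - 1) * L) with (pp * L + - L) by ring. rewrite exp_plus.
  unfold pp, aa. unfold Rminus. ring.
Qed.

Lemma Derive_f x : 0 < x -> Derive (fpaper S xi) x = Dfun (ln x).
Proof. intro; apply is_derive_unique, f_deriv; auto. Qed.

End Main.

Lemma lin_neg k b : k < 0 -> is_lim (fun L => b + k * L) m_infty p_infty.
Proof.
  intros hk P [M HM]. exists ((M - b) / k). intros L hL. apply HM.
  apply (Rmult_lt_compat_r (- k)) in hL; [|lra].
  replace ((M - b) / k * - k) with (b - M) in hL by (field; lra). nra.
Qed.

Lemma lin_pos k b : 0 < k -> is_lim (fun L => b + k * L) m_infty m_infty.
Proof.
  intros hk P [M HM]. exists ((M - b) / k). intros L hL. apply HM.
  apply (Rmult_lt_compat_r k) in hL; [|lra].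
  replace ((M - b) / k * k) with (M - b) in hL by (field; lra). nra.
Qed.

Lemma is_lim_fin_inf_comp (f g : R -> R) (l : Rbar) (x y : Rbar) :
  is_lim f y l -> is_lim g x y -> (y = p_infty \/ y = m_infty) -> is_lim (fun t => f (g t)) x l.
Proof.
  intros Hf Hg Hy. unfold is_lim in *. eapply filterlim_comp. exact Hg.
  destruct Hy as [-> | ->]; exact Hf.
Qed.

Lemma phi_lim : is_lim phi p_infty 0.
Proof. exact lim_e. Qed.

Lemma arg_minus_lim S xi : 0 < S -> is_lim (fun L => xi - aa S * L) m_infty p_infty.
Proof.
  intro hS. apply is_lim_ext with (fun L => xi + (- aa S) * L). intros; ring.
  apply lin_neg. unfold aa. pose proof (Rinv_0_lt_compat S hS). lra.
Qed.

Lemma arg_plus_lim S xi : 0 < S -> is_lim (fun L => xi + aa S * L) m_infty m_infty.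
Proof.
  intro hS. apply lin_pos. unfold aa. apply Rinv_0_lt_compat; auto.
Qed.

Lemma g_lim S xi : 0 < S -> is_lim (gfun S xi) m_infty (- pp S xi).
Proof.
  intro hS. unfold gfun.
  eapply is_lim_minus.
  apply is_lim_scal_l. apply (is_lim_fin_inf_comp phi (fun L => xi - aa S * L) 0 m_infty p_infty).
  apply phi_lim. apply arg_minus_lim; auto. auto.
  apply is_lim_scal_l. apply (is_lim_fin_inf_comp Ncdf (fun L => xi - aa S * L) 1 m_infty p_infty).
  apply Ncdf_lim_p. apply arg_minus_lim; auto. auto.
  simpl. unfold is_Rbar_minus, is_Rbar_plus. simpl. f_equal. f_equal. ring.
Qed.

Definition Fm S xi L := Ncdf (xi + / S * L) - exp (- (2 * xi) / S * L) * Ncdf (xi - / S * L).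

Lemma Fm_lim S xi : 0 < S -> xi < 0 -> is_lim (Fm S xi) m_infty 0.
Proof.
  intros hS hxi. unfold Fm.
  eapply is_lim_minus.
  apply (is_lim_fin_inf_comp Ncdf (fun L => xi + aa S * L) 0 m_infty m_infty).
  apply Ncdf_lim_m. apply arg_plus_lim; auto. auto.
  eapply is_lim_mult.
  apply is_lim_ext with (fun L => exp (0 + (- (2 * xi) / S) * L)). intros; f_equal; ring.
  apply (is_lim_fin_inf_comp exp (fun L => 0 + (- (2 * xi) / S) * L) 0 m_infty m_infty).
  exact is_lim_exp_m. apply lin_pos. apply Rdiv_lt_0_compat; lra. auto.
  apply (is_lim_fin_inf_comp Ncdf (fun L => xi - aa S * L) 1 m_infty p_infty).
  apply Ncdf_lim_p. apply arg_minus_lim; auto. auto.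
  simpl; auto.
  simpl. unfold is_Rbar_minus, is_Rbar_plus. simpl. f_equal. f_equal. ring.
Qed.

Lemma pp_pos S xi : 0 < S -> xi < 0 -> 0 < pp S xi.
Proof. intros. unfold pp. apply Rdiv_lt_0_compat; lra. Qed.

Lemma exp_lin_lim_p k : k < 0 -> is_lim (fun L => exp (k * L)) m_infty p_infty.
Proof.
  intro hk. apply is_lim_ext with (fun L => exp (0 + k * L)). intros; f_equal; ring.
  apply (is_lim_fin_inf_comp exp (fun L => 0 + k * L) p_infty m_infty p_infty).
  exact is_lim_exp_p. apply lin_neg; auto. auto.
Qed.

Lemma exp_lin_lim_0 k : 0 < k -> is_lim (fun L => exp (k * L)) m_infty 0.
Proof.
  intro hk. apply is_lim_ext with (fun L => exp (0 + k * L)). intros; f_equal; ring.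
  apply (is_lim_fin_inf_comp exp (fun L => 0 + k * L) 0 m_infty m_infty).
  exact is_lim_exp_m. apply lin_pos; auto. auto.
Qed.

Lemma D_lim1 S xi : 0 < S -> xi < 0 -> pp S xi < 1 -> is_lim (Dfun S xi) m_infty m_infty.
Proof.
  intros hS hxi hp. pose proof (pp_pos S xi hS hxi).
  assert (E : Rbar_mult p_infty (- pp S xi) = m_infty).
  { apply is_Rbar_mult_unique, is_Rbar_mult_p_infty_neg. simpl. lra. }
  rewrite <- E at 2.
  apply is_lim_mult. apply exp_lin_lim_p. lra. apply g_lim; auto.
  simpl. lra.
Qed.

Lemma D_lim2 S xi : 0 < S -> pp S xi = 1 -> is_lim (Dfun S xi) m_infty (-1).
Proof.
  intros hS hp. apply is_lim_ext with (gfun S xi).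
  intros L. unfold Dfun. rewrite hp. replace ((1 - 1) * L) with 0 by ring. rewrite exp_0. ring.
  replace (Finite (-1)) with (Finite (- pp S xi)) by (f_equal; lra). apply g_lim; auto.
Qed.

Lemma D_lim3 S xi : 0 < S -> pp S xi > 1 -> is_lim (Dfun S xi) m_infty 0.
Proof.
  intros hS hp.
  assert (E : Rbar_mult 0 (- pp S xi) = Finite 0).
  { simpl. f_equal. ring. }
  rewrite <- E.
  apply is_lim_mult. apply exp_lin_lim_0. lra. apply g_lim; auto.
  simpl. auto.
Qed.

Theorem lemma1 (S xi : R) (hS : 0 < S) (hxi : xi < 0) :
  (exists eps : R, 0 < eps /\
     forall x : R, 0 < x < eps ->
       fpaper S xi x < 0 /\ ex_derive (fpaper S xi) x /\ Derive (fpaper S xi) x < 0)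
  /\ (- S / 2 < xi ->
        filterlim (Derive (fpaper S xi)) (at_right 0) (Rbar_locally m_infty))
  /\ (xi = - S / 2 ->
        filterlim (Derive (fpaper S xi)) (at_right 0) (Rbar_locally (Finite (-1))))
  /\ (xi < - S / 2 ->
        filterlim (Derive (fpaper S xi)) (at_right 0) (Rbar_locally (Finite 0))).
Proof.
  pose proof (pp_pos S xi hS hxi) as hpp.
  assert (Htrans : forall l, is_lim (Dfun S xi) m_infty l ->
            filterlim (Derive (fpaper S xi)) (at_right 0) (Rbar_locally l)).
  { intros l H.
    apply filterlim_ext_loc with (fun x => Dfun S xi (ln x)).
    exists (mkposreal 1 Rlt_0_1). intros y _ hy. symmetry; apply Derive_f; auto.
    apply (filterlim_comp _ _ _ ln (Dfun S xi) (at_right 0) (Rbar_locally m_infty)).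
    apply is_lim_ln_0. exact H. }
  assert (Epp : pp S xi = - (2 * xi) / S) by reflexivity.
  split; [| split; [| split]].
  - assert (Hg : exists M, forall L, L < M -> gfun S xi L < 0).
    { pose proof (g_lim S xi hS) as H.
      assert (Hp : Rbar_locally (Finite (- pp S xi)) (fun y => y < 0)).
      { exists (mkposreal (pp S xi) hpp). intros y hy.
        change (Rabs (y - - pp S xi) < pp S xi) in hy.
        apply Rabs_def2 in hy. lra. }
      exact (H _ Hp). }
    destruct Hg as [M HM].
    assert (Hneg : forall y, 0 < y < exp M ->
              Derive (fpaper S xi) y < 0 /\ is_derive (fpaper S xi) y (Dfun S xi (ln y))).
    { intros y hy. assert (ln y < M).
      { rewrite <- (ln_exp M). apply ln_increasing; lra. }
      split.
      rewrite Derive_f by lra. unfold Dfun.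
      pose proof (exp_pos ((pp S xi - 1) * ln y)). pose proof (HM _ H). nra.
      apply f_deriv; lra. }
    assert (Hdec : forall t y, 0 < t < y -> y < exp M -> fpaper S xi y < fpaper S xi t).
    { intros t y ht hy.
      destruct (MVT_gen (fpaper S xi) t y (fun z => Dfun S xi (ln z))) as [c [hc heq]].
      - intros z hz. rewrite Rmin_left, Rmax_right in hz by lra. apply f_deriv; lra.
      - intros z hz. rewrite Rmin_left, Rmax_right in hz by lra.
        apply continuity_pt_filterlim. apply (ex_derive_continuous (fpaper S xi) z).
        eexists; apply f_deriv; lra.
      - rewrite Rmin_left, Rmax_right in hc by lra.
        assert (Dfun S xi (ln c) < 0).
        { assert (ln c < M). { rewrite <- (ln_exp M). apply ln_increasing; lra. }
          unfold Dfun. pose proof (exp_pos ((pp S xi - 1) * ln c)). pose proof (HM _ H). nra. }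
        nra. }
    assert (Hlim : filterlim (fpaper S xi) (at_right 0) (locally 0)).
    { apply (filterlim_comp _ _ _ ln (Fm S xi) (at_right 0) (Rbar_locally m_infty)).
      apply is_lim_ln_0. exact (Fm_lim S xi hS hxi). }
    exists (exp M). split. apply exp_pos.
    intros x hx. split; [| split].
    + set (y := x / 2).
      assert (fpaper S xi x < fpaper S xi y) by (apply Hdec; unfold y; lra).
      assert (fpaper S xi y <= 0).
      { destruct (Rle_lt_dec (fpaper S xi y) 0) as [h|h]; auto.
        assert (HP : locally 0 (fun z => z < fpaper S xi y)).
        { exists (mkposreal _ h). intros z hz. change (Rabs (z - 0) < fpaper S xi y) in hz.
          apply Rabs_def2 in hz. lra. }
        destruct (Hlim _ HP) as [eps Heps].
        set (t := Rmin (eps / 2) (y / 2)).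
        assert (0 < t).
        { unfold t. apply Rmin_glb_lt. pose proof (cond_pos eps). lra. unfold y; lra. }
        assert (t <= y / 2) by (unfold t; apply Rmin_r).
        assert (t <= eps / 2) by (unfold t; apply Rmin_l).
        assert (fpaper S xi t < fpaper S xi y).
        { apply Heps; auto. change (Rabs (t - 0) < eps). rewrite Rminus_0_r, Rabs_pos_eq by lra.
          pose proof (cond_pos eps). lra. }
        assert (fpaper S xi y < fpaper S xi t) by (apply Hdec; unfold y in *; lra).
        lra. }
      lra.
    + eexists; apply (Hneg x hx).
    + apply (Hneg x hx).
  - intros h. apply Htrans. apply D_lim1; auto. rewrite Epp.
    apply (Rmult_lt_reg_r S); auto. unfold Rdiv. rewrite Rmult_assoc, Rinv_l by lra. lra.
  - intros h. apply Htrans. apply D_lim2; auto. rewrite Epp, h. field. lra.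
  - intros h. apply Htrans. apply D_lim3; auto. rewrite Epp.
    apply (Rmult_lt_reg_r S); auto. unfold Rdiv. rewrite Rmult_assoc, Rinv_l by lra. lra.
Qed.
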